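(* Let $\mathcal{U}\in\beta\mathbb{N}$ be idempotent. If $\mathbb{A}_{\mathcal{U}}$ contains some $\mu$ with $\mu\,\hat{}\,\mu=\mu$, then there exist $\mu_r\in\mathbb{A}_{\mathcal{U}}$ with $\mu_r\,\hat{}\,\mu_r=\mu_r$ and sets $E_r\subseteq\mathbb{T}$, for $r\in2^\omega$, such that $\mu_r(E_s)=1$ if $r=s$ and $\mu_r(E_s)=0$ otherwise. In particular, the set of idempotents in $\mathbb{A}_{\mathcal{U}}$ is either empty or not closed.
   Context: For $a,b\subseteq(0,1]$ put $a\,\hat{}\,b=\tfrac12 a\cup\tfrac12(b+1)$; $\mathbb{T}$ is the set generated from $\mathbf{1}=\{1\}$ by $\hat{}$ (free binary system on one generator), $\#(t)$ is the cardinality of $t$, $\mathbb{T}_n=\{t:\#(t)=n\}$, $\mathbb{A}_n$ is the set of probability measures on $\mathbb{T}_n$. $\Pr(\mathbb{T})$ is the set of finitely additive probability measures on $\mathbb{T}$, viewed as positive normalized functionals on $\ell^\infty(\mathbb{T})$ with the weak* topology; $\mathbb{A}_n\subseteq\Pr(\mathbb{T})$; $(\mu\,\hat{}\,\nu)(f)=\int\int f(x\,\hat{}\,y)\,d\nu(y)\,d\mu(x)$. $\mathcal{U}\in\beta\mathbb{N}$ is idempotent if $\mathcal{U}+\mathcal{U}=\mathcal{U}$ ($W\in\mathcal{U}+\mathcal{V}$ iff $\{m:\{n:m+n\in W\}\in\mathcal{V}\}\in\mathcal{U}$). $\mathbb{A}_{\mathcal{U}}$ is the set of $\mu\in\Pr(\mathbb{T})$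 such that for every weak*-open $W\ni\mu$, $\{m\in\mathbb{N}:W\cap\mathbb{A}_m\neq\emptyset\}\in\mathcal{U}$. An idempotent in $\mathbb{A}_{\mathcal{U}}$ is a $\mu$ with $\mu\,\hat{}\,\mu=\mu$. *)

(* Defs.v *)
From Stdlib Require Import Reals List.
Import ListNotations.
Open Scope R_scope.

(* The free binary system on one generator: binary trees.
   [Leaf] is the generator 1 = {1}; [Node a b] is a ^ b. *)
Inductive tree : Type := Leaf : tree | Node : tree -> tree -> tree.

Fixpoint card (t : tree) : nat :=
  match t with Leaf => 1%nat | Node a b => (card a + card b)%nat end.

Definition bounded (f : tree -> R) : Prop := exists M, forall t, Rabs (f t) <= M.

(* Pr(T): finitely additive probability measures = positive normalized
   linear functionals on l^infty(T) (only values on bounded f matter). *)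
Definition is_mean (mu : (tree -> R) -> R) : Prop :=
  (forall f g, bounded f -> bounded g -> mu (fun t => f t + g t) = mu f + mu g) /\
  (forall c f, bounded f -> mu (fun t => c * f t) = c * mu f) /\
  (forall f, bounded f -> (forall t, 0 <= f t) -> 0 <= mu f) /\
  mu (fun _ => 1) = 1.

Definition conv (mu nu : (tree -> R) -> R) : (tree -> R) -> R :=
  fun f => mu (fun x => nu (fun y => f (Node x y))).

Definition idem (mu : (tree -> R) -> R) : Prop :=
  is_mean mu /\ forall f, bounded f -> conv mu mu f = mu f.

Definition wopen (W : ((tree -> R) -> R) -> Prop) : Prop :=
  forall nu, is_mean nu -> W nu ->
    exists (fs : list (tree -> R)) (eps : R), 0 < eps /\ Forall bounded fs /\
      forall lam, is_mean lam ->
        (forall f, In f fs -> Rabs (lam f - nu f) < eps) -> W lam.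

Definition wclosed (C : ((tree -> R) -> R) -> Prop) : Prop :=
  wopen (fun nu => is_mean nu /\ ~ C nu).

Definition wsum (l : list (R * tree)) (f : tree -> R) : R :=
  fold_right (fun p acc => fst p * f (snd p) + acc) 0 l.

Definition in_A (n : nat) (nu : (tree -> R) -> R) : Prop :=
  exists l : list (R * tree),
    Forall (fun p => 0 <= fst p /\ card (snd p) = n) l /\
    wsum l (fun _ => 1) = 1 /\
    forall f, nu f = wsum l f.

Definition is_ultrafilter (U : (nat -> Prop) -> Prop) : Prop :=
  ~ U (fun _ => False) /\ U (fun _ => True) /\
  (forall A B, U A -> (forall n, A n -> B n) -> U B) /\
  (forall A B, U A -> U B -> U (fun n => A n /\ B n)) /\
  (forall A, U A \/ U (fun n => ~ A n)).

Definition uf_sum (U V : (nat -> Prop) -> Prop) : (nat -> Prop) -> Prop :=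
  fun W => U (fun m => V (fun n => W (m + n)%nat)).

Definition uf_idempotent (U : (nat -> Prop) -> Prop) : Prop :=
  forall W, uf_sum U U W <-> U W.

Definition in_AU (U : (nat -> Prop) -> Prop) (mu : (tree -> R) -> R) : Prop :=
  is_mean mu /\
  forall W, wopen W -> W mu ->
    U (fun m => exists nu, in_A m nu /\ W nu).

Definition indicator (E : tree -> bool) : tree -> R :=
  fun t => if E t then 1 else 0.

(* Main.v *)
Require Import Defs.
From Stdlib Require Import Reals List Lra Lia Classical ClassicalEpsilon FunctionalExtensionality PeanoNat.
Import ListNotations.
Import Defs.
Open Scope R_scope.

Lemma abs_lt a e : Rabs a < e <-> (- e < a /\ a < e).
Proof. unfold Rabs; destruct (Rcase_abs a); split; intros; lra. Qed.
Lemma abs_le a e : Rabs a <= e <-> (- e <= a /\ a <= e).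
Proof. unfold Rabs; destruct (Rcase_abs a); split; intros; lra. Qed.

Lemma bounded_const (c : R) : bounded (fun _ => c).
Proof. exists (Rabs c); intros; lra. Qed.
Lemma bounded_plus f g : bounded f -> bounded g -> bounded (fun t => f t + g t).
Proof. intros [M HM] [N HN]; exists (M+N); intro t.
  specialize (HM t); specialize (HN t); apply abs_le in HM; apply abs_le in HN; apply abs_le; lra. Qed.
Lemma bounded_scal (c : R) (f : tree -> R) : bounded f -> bounded (fun t => c * f t).
Proof. intros [M HM]; exists (Rabs c * M); intro t; rewrite Rabs_mult;
  apply Rmult_le_compat_l; [apply Rabs_pos|auto]. Qed.
Lemma bounded_minus f g : bounded f -> bounded g -> bounded (fun t => f t - g t).
Proof. intros Hf Hg. destruct (bounded_plus f (fun t => -1 * g t) Hf (bounded_scal (-1) g Hg)) as [M HM].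
  exists M; intro t; specialize (HM t); replace (f t - g t) with (f t + -1 * g t) by ring; auto. Qed.
Lemma bounded_comp f (g : tree -> tree) : bounded f -> bounded (fun t => f (g t)).
Proof. intros [M HM]; exists M; auto. Qed.
Lemma bounded_ind E : bounded (indicator E).
Proof. exists 1; intro t; unfold indicator; destruct (E t); apply abs_le; lra. Qed.

Lemma mean_ext (mu : (tree->R)->R) (f g : tree -> R) : (forall t, f t = g t) -> mu f = mu g.
Proof. intros H; f_equal; apply functional_extensionality; auto. Qed.

Lemma mean_add mu f g : is_mean mu -> bounded f -> bounded g -> mu (fun t => f t + g t) = mu f + mu g.
Proof. intros [H _]; auto. Qed.
Lemma mean_scal (mu : (tree->R)->R) (c : R) (f : tree -> R) : is_mean mu -> bounded f -> mu (fun t => c * f t) = c * mu f.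
Proof. intros [_ [H _]]; auto. Qed.
Lemma mean_pos mu f : is_mean mu -> bounded f -> (forall t, 0 <= f t) -> 0 <= mu f.
Proof. intros [_ [_ [H _]]]; auto. Qed.
Lemma mean_const (mu : (tree->R)->R) (c : R) : is_mean mu -> mu (fun _ => c) = c.
Proof. intros Hm. pose proof (mean_scal mu c (fun _ => 1) Hm (bounded_const 1)) as E.
  rewrite (proj2 (proj2 (proj2 Hm))) in E. transitivity (c*1); [|ring]. rewrite <- E.
  apply mean_ext; intros; simpl; ring. Qed.
Lemma mean_minus mu f g : is_mean mu -> bounded f -> bounded g -> mu (fun t => f t - g t) = mu f - mu g.
Proof. intros Hm Hf Hg.
  rewrite (mean_ext mu _ (fun t => f t + (-1) * g t)) by (intros; ring).
  rewrite mean_add; auto. rewrite mean_scal; auto. ring. apply bounded_scal; auto. Qed.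
Lemma mean_mono mu f g : is_mean mu -> bounded f -> bounded g -> (forall t, f t <= g t) -> mu f <= mu g.
Proof. intros Hm Hf Hg H. assert (0 <= mu (fun t => g t - f t)).
  { apply mean_pos; auto. apply bounded_minus; auto. intros t; specialize (H t); lra. }
  rewrite mean_minus in H0; auto; lra. Qed.
Lemma mean_abs_le (mu : (tree->R)->R) (f : tree -> R) (M : R) : is_mean mu -> (forall t, Rabs (f t) <= M) -> Rabs (mu f) <= M.
Proof. intros Hm H. assert (Hb : bounded f) by (exists M; auto).
  assert (mu f <= M). { rewrite <- (mean_const mu M Hm). apply mean_mono; auto. apply bounded_const.
    intros t; specialize (H t); apply abs_le in H; lra. }
  assert (- M <= mu f). { rewrite <- (mean_const mu (-M) Hm). apply mean_mono; auto. apply bounded_const.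
    intros t; specialize (H t); apply abs_le in H; lra. }
  apply abs_le; lra. Qed.
Lemma bounded_inner mu f : is_mean mu -> bounded f -> bounded (fun x => mu (fun y => f (Node x y))).
Proof. intros Hm [M HM]. exists M. intros x. apply mean_abs_le; auto. Qed.

Definition push (mu : (tree -> R) -> R) (phi : tree -> tree) : (tree -> R) -> R :=
  fun f => mu (fun t => f (phi t)).

Lemma push_mean mu phi : is_mean mu -> is_mean (push mu phi).
Proof. intros Hm. unfold push. split; [|split; [|split]].
  - intros f g Hf Hg. apply (mean_add mu (fun t => f (phi t)) (fun t => g (phi t))); auto; apply bounded_comp; auto.
  - intros c f Hf. apply (mean_scal mu c (fun t => f (phi t))); auto; apply bounded_comp; auto.
  - intros f Hf H. apply mean_pos; auto; apply bounded_comp; auto.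
  - apply mean_const; auto. Qed.

Section UF. End UF.
Lemma U_mono U A B : is_ultrafilter U -> U A -> (forall n, A n -> B n) -> U B.
Proof. intros (_&_&H&_) ; eauto. Qed.
Lemma U_and U A B : is_ultrafilter U -> U A -> U B -> U (fun n => A n /\ B n).
Proof. intros (_&_&_&H&_) ; eauto. Qed.
Lemma U_ne U A : is_ultrafilter U -> U A -> exists n, A n.
Proof. intros HU HA. apply NNPP; intro C. apply (proj1 HU). apply (U_mono U A); auto.
  intros n Hn; apply C; eauto. Qed.
Lemma U_dich U A : is_ultrafilter U -> U A \/ U (fun n => ~ A n).
Proof. intros (_&_&_&_&H); auto. Qed.
Lemma U_true U : is_ultrafilter U -> U (fun _ => True).
Proof. intros (_&H&_); auto. Qed.

Lemma U_gt U : is_ultrafilter U -> U (fun n => (0 < n)%nat) -> uf_idempotent U ->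
  forall k, U (fun n => (k < n)%nat).
Proof.
  intros HU hN hI k.
  destruct (U_dich U (fun n => (k < n)%nat) HU) as [H|H]; auto. exfalso.
  assert (exists j, U (fun n => n = j)) as [j Hj].
  { clear hN hI. induction k.
    - exists 0%nat. apply (U_mono U _ _ HU H); intros; lia.
    - destruct (U_dich U (fun n => n = S k) HU) as [H1|H1]; eauto.
      apply IHk. apply (U_mono U _ _ HU (U_and U _ _ HU H H1)). intros n [A B]; lia. }
  destruct (U_ne U _ HU (U_and U _ _ HU hN Hj)) as [n [Hn1 Hn2]].
  apply hI in Hj. unfold uf_sum in Hj.
  assert (Hj0 : U (fun n => n = j)) by (apply hI; exact Hj).
  destruct (U_ne U _ HU (U_and U _ _ HU Hj Hj0)) as [m [Hm1 Hm2]]. subst m.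
  destruct (U_ne U _ HU (U_and U _ _ HU Hm1 Hj0)) as [m [Hm3 Hm4]]. lia.
Qed.

Lemma abs_tri3 a b c e1 e2 : Rabs (a - b) < e1 -> Rabs (b - c) < e2 -> Rabs (a - c) < e1 + e2.
Proof. rewrite !abs_lt. intros; lra. Qed.

Lemma wsum_zero l h m : Forall (fun p => 0 <= fst p /\ card (snd p) = m) l ->
  (forall t, card t = m -> h t = 0) -> wsum l h = 0.
Proof. intros HF Hh; induction HF as [|p l [H1 H2] HF IH]; simpl; auto.
  rewrite IH, (Hh _ H2); ring. Qed.

Lemma null_card U mu (Pb : nat -> bool) h : is_ultrafilter U -> in_AU U mu ->
  U (fun n => Pb n = true) -> bounded h -> (forall t, Pb (card t) = true -> h t = 0) -> mu h = 0.
Proof.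
  intros HU [Hm HA] HP Hb Hz. apply NNPP; intro Hne.
  set (eps := Rabs (mu h)). assert (Heps : 0 < eps) by (apply Rabs_pos_lt; auto).
  set (W := fun lam : (tree -> R) -> R => Rabs (lam h - mu h) < eps).
  assert (Wo : wopen W).
  { intros nu Hnu Wnu. exists [h], (eps - Rabs (nu h - mu h)). split; [unfold W in Wnu; lra|].
    split; [constructor; auto|]. intros lam Hlam Hc. specialize (Hc h (or_introl eq_refl)).
    unfold W. unfold W in Wnu. apply abs_lt in Hc. revert Hc Wnu. unfold Rabs.
    destruct (Rcase_abs (nu h - mu h)); destruct (Rcase_abs (lam h - mu h)); intros; lra. }
  assert (Wm : W mu) by (unfold W; rewrite Rminus_diag, Rabs_R0; auto).
  specialize (HA W Wo Wm).
  destruct (U_ne U _ HU (U_and U _ _ HU HA HP)) as [m [[nu [[l [Hl [_ Hf]]] Wnu]] Pm]].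
  unfold W in Wnu. rewrite Hf in Wnu. rewrite (wsum_zero l h m) in Wnu; auto.
  - unfold eps in Wnu. rewrite Rminus_0_l, Rabs_Ropp in Wnu. lra.
  - intros t Ht; apply Hz; subst; auto.
Qed.

Lemma wsum_map l f (phi : tree -> tree) :
  wsum (map (fun p => (fst p, phi (snd p))) l) f = wsum l (fun t => f (phi t)).
Proof. induction l; simpl; auto; rewrite IHl; auto. Qed.

Lemma in_A_push m nu phi : (forall t, card (phi t) = card t) -> in_A m nu -> in_A m (push nu phi).
Proof. intros Hc [l [Hl [H1 Hf]]]. exists (map (fun p => (fst p, phi (snd p))) l). split; [|split].
  - rewrite Forall_map. eapply Forall_impl; [|exact Hl]. intros [w t] [A B]; simpl in *; rewrite Hc; auto.
  - rewrite wsum_map; auto.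
  - intros f. unfold push. rewrite wsum_map. apply Hf. Qed.

Lemma in_AU_push U mu phi : is_ultrafilter U -> (forall t, card (phi t) = card t) -> in_AU U mu -> in_AU U (push mu phi).
Proof.
  intros HU Hc [Hm HA]. split; [apply push_mean; auto|].
  intros W Wo Wmu.
  set (W' := fun lam : (tree -> R) -> R => W (push lam phi)).
  assert (Wo' : wopen W').
  { intros nu Hnu Wnu. destruct (Wo (push nu phi) (push_mean nu phi Hnu) Wnu) as [fs [eps [He [Hb Hcl]]]].
    exists (map (fun f t => f (phi t)) fs), eps. split; auto. split.
    - rewrite Forall_map. eapply Forall_impl; [|exact Hb]. intros f Hf; apply bounded_comp; auto.
    - intros lam Hlam Hcl2. unfold W'. apply Hcl. apply push_mean; auto.
      intros f Hf. unfold push. apply (Hcl2 (fun t => f (phi t))). apply (in_map (fun f t => f (phi t))); auto. }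
  specialize (HA W' Wo' Wmu). apply (U_mono U _ _ HU HA).
  intros n [nu [H1 H2]]. exists (push nu phi). split; auto. apply in_A_push; auto.
Qed.

Fixpoint pad (r : nat -> bool) (n : nat) : tree :=
  match n with O => Leaf | S n' => if r (pred n') then Node Leaf (pad r n') else Node (pad r n') Leaf end.
Definition tau (r : nat -> bool) (N : nat) : tree := Node Leaf (pad r (N - 2)).
Definition blk (p n : nat) : bool := ((4 + p <=? Nat.log2 n)%nat && Nat.even (Nat.log2 n - (4 + p)))%bool.
Definition kidx (p n : nat) : nat := Nat.div2 (Nat.log2 n - (4 + p)).
Definition Aset (p : nat) (r : nat -> bool) (n : nat) : bool := negb (blk p n && r (kidx p n)).
Definition good (p : nat) (r : nat -> bool) (m n : nat) : bool := ((2 <=? m)%nat && (m <? n)%nat && Aset p r n)%bool.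
Fixpoint phi (p : nat) (r : nat -> bool) (t : tree) : tree :=
  match t with Leaf => Leaf
  | Node x y => if good p r (card x) (card y) then Node (phi p r x) (phi p r y) else tau r (card x + card y) end.
Fixpoint teq (a b : tree) : bool :=
  match a, b with Leaf, Leaf => true | Node a1 a2, Node b1 b2 => (teq a1 b1 && teq a2 b2)%bool | _, _ => false end.
Fixpoint Eset (p : nat) (r : nat -> bool) (t : tree) : bool :=
  match t with Leaf => true
  | Node x y => if good p r (card x) (card y) then (Eset p r x && Eset p r y)%bool
                else teq (Node x y) (tau r (card x + card y)) end.

Lemma teq_refl a : teq a a = true.
Proof. induction a; simpl; auto. rewrite IHa1, IHa2; auto. Qed.
Lemma teq_eq a b : teq a b = true -> a = b.
Proof. revert b; induction a; destruct b; simpl; try discriminate; auto.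
  intros H; apply andb_prop in H; destruct H; f_equal; auto. Qed.

Lemma card_pos t : (1 <= card t)%nat.
Proof. induction t; simpl; lia. Qed.
Lemma card_pad r n : card (pad r n) = S n.
Proof. induction n; simpl; auto. destruct (r (pred n)); simpl; rewrite IHn; lia. Qed.
Lemma card_tau r N : (2 <= N)%nat -> card (tau r N) = N.
Proof. intros; unfold tau; simpl; rewrite card_pad; lia. Qed.
Lemma card_phi p r t : card (phi p r t) = card t.
Proof. induction t; simpl; auto. destruct (good p r (card t1) (card t2)); simpl.
  - lia.
  - unfold tau; simpl; rewrite card_pad. pose proof (card_pos t1); pose proof (card_pos t2); lia. Qed.

Lemma Eset_phi p r t : Eset p r (phi p r t) = true.
Proof. induction t; simpl; auto. destruct (good p r (card t1) (card t2)) eqn:G.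
  - simpl. rewrite !card_phi, G, IHt1, IHt2; auto.
  - simpl. rewrite card_pad. replace (S (card t1 + card t2 - 2) - 1)%nat with (card t1 + card t2 - 2)%nat by lia.
    apply teq_refl. Qed.

Lemma pad_inj r s n : pad r n = pad s n -> forall k, (S k < n)%nat -> r k = s k.
Proof.
  induction n; intros H k Hk; [lia|]. simpl in H.
  destruct n as [|n']; [lia|].
  assert (Hne : pad r (S n') <> Leaf) by (intro E; pose proof (card_pad r (S n')); rewrite E in H0; simpl in H0; lia).
  assert (Hne' : pad s (S n') <> Leaf) by (intro E; pose proof (card_pad s (S n')); rewrite E in H0; simpl in H0; lia).
  simpl pred in H.
  destruct (r n') eqn:R1, (s n') eqn:S1; inversion H; subst.
  - destruct (Nat.eq_dec (S k) (S n')); [assert (k = n') by lia; subst; congruence|].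
    apply IHn; auto; lia.
  - congruence.
  - congruence.
  - destruct (Nat.eq_dec (S k) (S n')); [assert (k = n') by lia; subst; congruence|].
    apply IHn; auto; lia.
Qed.

Lemma blk01 n : blk 0 n = true -> blk 1 n = true -> False.
Proof. unfold blk. intros H1 H2. apply andb_prop in H1; apply andb_prop in H2.
  destruct H1 as [A1 B1]; destruct H2 as [A2 B2].
  apply Nat.leb_le in A1; apply Nat.leb_le in A2. apply Nat.even_spec in B1; apply Nat.even_spec in B2.
  destruct B1 as [a Ha]; destruct B2 as [b Hb]. simpl in *. lia. Qed.

Definition p0 (U : (nat -> Prop) -> Prop) : nat :=
  if excluded_middle_informative (U (fun n => blk 0 n = true)) then 1%nat else 0%nat.

Lemma p0_le U : (p0 U <= 1)%nat.
Proof. unfold p0; destruct excluded_middle_informative; lia. Qed.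

Lemma U_blk U : is_ultrafilter U -> U (fun n => blk (p0 U) n = false).
Proof. intros HU. unfold p0; destruct excluded_middle_informative as [H|H].
  - destruct (U_dich U (fun n => blk 1 n = false) HU) as [H1|H1]; auto. exfalso.
    destruct (U_ne U _ HU (U_and U _ _ HU H H1)) as [n [A B]]. apply B. destruct (blk 1 n) eqn:E; auto.
    exfalso; apply (blk01 n); auto.
  - destruct (U_dich U (fun n => blk 0 n = true) HU) as [H1|H1]; [contradiction|].
    apply (U_mono U _ _ HU H1). intros n Hn; destruct (blk 0 n); [exfalso; apply Hn; auto|auto]. Qed.

Lemma U_good U r m : is_ultrafilter U -> U (fun n => (0 < n)%nat) -> uf_idempotent U -> (2 <= m)%nat ->
  U (fun n => good (p0 U) r m n = true).
Proof. intros HU hN hI Hm. apply (U_mono U _ _ HU (U_and U _ _ HU (U_gt U HU hN hI m) (U_blk U HU))).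
  intros n [A B]. unfold good, Aset. rewrite B.
  apply Nat.leb_le in Hm. apply Nat.ltb_lt in A. rewrite Hm, A. auto. Qed.

Lemma idem_push U mu r : is_ultrafilter U -> U (fun n => (0 < n)%nat) -> uf_idempotent U ->
  in_AU U mu -> idem mu -> idem (push mu (phi (p0 U) r)).
Proof.
  intros HU hN hI HA [Hm Hid]. set (ph := phi (p0 U) r).
  split; [apply push_mean; auto|]. intros f Hf.
  unfold conv, push. rewrite <- (Hid (fun t => f (ph t))) by (apply bounded_comp; auto).
  unfold conv.
  assert (Hb1 : bounded (fun x => mu (fun y => f (Node (ph x) (ph y))))).
  { destruct Hf as [M HM]. exists M. intros x. apply mean_abs_le; auto. }
  assert (Hb2 : bounded (fun x => mu (fun y => f (ph (Node x y))))).
  { destruct Hf as [M HM]. exists M. intros x. apply mean_abs_le; auto. }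
  apply Rminus_diag_uniq. rewrite <- mean_minus; auto.
  apply (null_card U mu (fun n => (2 <=? n)%nat)); auto.
  - apply (U_mono U _ _ HU (U_gt U HU hN hI 1)). intros n Hn; apply Nat.leb_le; lia.
  - apply bounded_minus; auto.
  - intros x Hx. apply Nat.leb_le in Hx. rewrite <- mean_minus; auto.
    + apply (null_card U mu (good (p0 U) r (card x))); auto.
      * apply U_good; auto.
      * apply bounded_minus; apply bounded_comp; auto.
      * intros y Hy. unfold ph. simpl. rewrite Hy. ring.
    + apply bounded_comp; auto.
    + apply bounded_comp; auto.
Qed.

Lemma log2_block k p n : (2 ^ (2 * k + 4 + p) <= n < 2 * 2 ^ (2 * k + 4 + p))%nat ->
  blk p n = true /\ kidx p n = k.
Proof. intros H. assert (L : Nat.log2 n = (2 * k + 4 + p)%nat).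
  { apply Nat.log2_unique; [lia|]. rewrite Nat.pow_succ_r'. lia. }
  unfold blk, kidx. rewrite L. replace (2 * k + 4 + p - (4 + p))%nat with (2 * k)%nat by lia.
  rewrite Nat.div2_double. split; auto. apply andb_true_intro; split.
  - apply Nat.leb_le; lia.
  - apply Nat.even_spec. exists k; lia. Qed.

Lemma disj p r s k : r k <> s k -> forall t,
  (2 * 2 ^ (2 * k + 4 + p) <= card t)%nat -> Eset p r t = true -> Eset p s t = true -> False.
Proof.
  intros Hrs t. induction t as [|a IHa b IHb]; intros Hc Er Es.
  - change (card Leaf) with 1%nat in Hc. pose proof (Nat.pow_gt_lin_r 2 (2 * k + 4 + p) ltac:(lia)); lia.
  - change (card (Node a b)) with (card a + card b)%nat in Hc. simpl in Er, Es.
    assert (Hbig : (2 * k + 5 < 2 * 2 ^ (2 * k + 4 + p))%nat).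
    { pose proof (Nat.pow_gt_lin_r 2 (2 * k + 4 + p) ltac:(lia)). lia. }
    destruct (good p r (card a) (card b)) eqn:Gr, (good p s (card a) (card b)) eqn:Gs.
    + apply andb_prop in Er; apply andb_prop in Es. destruct Er as [_ Erb]; destruct Es as [_ Esb].
      destruct (Nat.le_gt_cases (2 * 2 ^ (2 * k + 4 + p)) (card b)) as [Hb|Hb]; [apply IHb; auto|].
      unfold good in Gr, Gs. apply andb_prop in Gr; apply andb_prop in Gs.
      destruct Gr as [Gr1 Gr2]; destruct Gs as [_ Gs2]. apply andb_prop in Gr1. destruct Gr1 as [_ Hlt].
      apply Nat.ltb_lt in Hlt.
      destruct (log2_block k p (card b)) as [B1 B2]; [lia|].
      unfold Aset in Gr2, Gs2. rewrite B1, B2 in Gr2, Gs2. simpl in Gr2, Gs2.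
      destruct (r k), (s k); simpl in *; congruence.
    + apply andb_prop in Es. destruct Es as [Es _]. apply teq_eq in Es. subst a.
      unfold good in Gr. simpl in Gr. discriminate.
    + apply andb_prop in Er. destruct Er as [Er _]. apply teq_eq in Er. subst a.
      unfold good in Gs. simpl in Gs. discriminate.
    + apply andb_prop in Er; apply andb_prop in Es. destruct Er as [_ Er]; destruct Es as [_ Es].
      apply teq_eq in Er; apply teq_eq in Es.
      assert (PP : pad r (card a + card b - 2) = pad s (card a + card b - 2)) by congruence.
      apply Hrs. apply (pad_inj r s _ PP). lia.
Qed.

Definition Mr (U : (nat -> Prop) -> Prop) mu (r : nat -> bool) := push mu (phi (p0 U) r).
Definition Er (U : (nat -> Prop) -> Prop) (r : nat -> bool) := Eset (p0 U) r.

Lemma fun_neq (r s : nat -> bool) : r <> s -> exists k, r k <> s k.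
Proof. intros H. apply NNPP; intro C. apply H. apply functional_extensionality. intros k.
  apply NNPP; intro D; apply C; eauto. Qed.

Lemma part1 U mu : is_ultrafilter U -> U (fun n => (0 < n)%nat) -> uf_idempotent U ->
  in_AU U mu -> idem mu ->
  (forall r, in_AU U (Mr U mu r) /\ idem (Mr U mu r)) /\
  (forall r, Mr U mu r (indicator (Er U r)) = 1) /\
  (forall r s, r <> s -> Mr U mu r (indicator (Er U s)) = 0).
Proof.
  intros HU hN hI HA Hid. split; [|split].
  - intros r. split. apply in_AU_push; auto. apply card_phi. apply idem_push; auto.
  - intros r. unfold Mr, Er, push. rewrite (mean_ext mu _ (fun _ => 1)).
    + apply mean_const. destruct HA; auto.
    + intros t. unfold indicator. rewrite Eset_phi. auto.
  - intros r s Hrs. destruct (fun_neq r s Hrs) as [k Hk].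
    unfold Mr, Er, push.
    apply (null_card U mu (fun n => (2 * 2 ^ (2 * k + 4 + p0 U) <=? n)%nat)); auto.
    + apply (U_mono U _ _ HU (U_gt U HU hN hI (2 * 2 ^ (2 * k + 4 + p0 U)))).
      intros n Hn; apply Nat.leb_le; lia.
    + apply bounded_comp, bounded_ind.
    + intros t Ht. apply Nat.leb_le in Ht. unfold indicator.
      destruct (Eset (p0 U) s (phi (p0 U) r t)) eqn:E; auto. exfalso.
      apply (disj (p0 U) r s k Hk (phi (p0 U) r t)); auto.
      rewrite card_phi; auto. apply Eset_phi.
Qed.

Definition islim (U : (nat -> Prop) -> Prop) (a : nat -> R) (c : R) :=
  forall eps, 0 < eps -> U (fun n => Rabs (a n - c) < eps).
Definition ulim (U : (nat -> Prop) -> Prop) (a : nat -> R) : R :=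
  match excluded_middle_informative (exists c, islim U a c) with
  | left H => proj1_sig (constructive_indefinite_description _ H)
  | right _ => 0 end.

Lemma islim_uniq U a c d : is_ultrafilter U -> islim U a c -> islim U a d -> c = d.
Proof. intros HU Hc Hd. apply NNPP; intro Hne. set (e := Rabs (c - d) / 2).
  assert (Hp : 0 < Rabs (c - d)) by (apply Rabs_pos_lt; lra).
  assert (He: 0 < e) by (unfold e; lra).
  destruct (U_ne U _ HU (U_and U _ _ HU (Hc e He) (Hd e He))) as [n [A B]].
  assert (Rabs (c - d) < 2 * e). { apply abs_lt in A; apply abs_lt in B. apply abs_lt. lra. }
  unfold e in H; lra. Qed.

Lemma ulim_spec U a : (exists c, islim U a c) -> islim U a (ulim U a).
Proof. intros H. unfold ulim. destruct excluded_middle_informative as [H'|H']; [|contradiction].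
  exact (proj2_sig (constructive_indefinite_description _ H')). Qed.

Lemma ulim_eq U a c : is_ultrafilter U -> islim U a c -> ulim U a = c.
Proof. intros HU H. apply (islim_uniq U a); auto. apply ulim_spec; eauto. Qed.

Lemma islim_exists U a M : is_ultrafilter U -> (forall n, Rabs (a n) <= M) -> exists c, islim U a c.
Proof.
  intros HU HM. set (S := fun c => U (fun n => c <= a n)).
  assert (Sb : bound S).
  { exists M. intros c Hc. destruct (U_ne U _ HU Hc) as [n Hn]. specialize (HM n). apply abs_le in HM. lra. }
  assert (Sn : exists x, S x).
  { exists (- M). apply (U_mono U _ _ HU (U_true U HU)). intros n _. specialize (HM n). apply abs_le in HM. lra. }
  destruct (completeness S Sb Sn) as [L [Lub Lleast]]. exists L. intros eps He.
  assert (A1 : U (fun n => a n < L + eps)).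
  { destruct (U_dich U (fun n => L + eps <= a n) HU) as [H|H].
    - exfalso. specialize (Lub (L + eps) H). lra.
    - apply (U_mono U _ _ HU H). intros n Hn. lra. }
  assert (A2 : exists c, S c /\ L - eps < c).
  { apply NNPP; intro C. assert (L <= L - eps); [|lra]. apply Lleast. intros c Hc.
    apply Rnot_lt_le. intro Hl. apply C. eauto. }
  destruct A2 as [c [Sc Hlc]].
  apply (U_mono U _ _ HU (U_and U _ _ HU A1 Sc)). intros n [B1 B2]. apply abs_lt. lra.
Qed.

Lemma islim_plus U a b c d : is_ultrafilter U -> islim U a c -> islim U b d ->
  islim U (fun n => a n + b n) (c + d).
Proof. intros HU Ha Hb eps He.
  apply (U_mono U _ _ HU (U_and U _ _ HU (Ha (eps/2) ltac:(lra)) (Hb (eps/2) ltac:(lra)))).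
  intros n [A B]. apply abs_lt in A; apply abs_lt in B; apply abs_lt; lra. Qed.

Lemma islim_const U c : is_ultrafilter U -> islim U (fun _ => c) c.
Proof. intros HU eps He. apply (U_mono U _ _ HU (U_true U HU)). intros; rewrite Rminus_diag, Rabs_R0; auto. Qed.

Lemma islim_scal U a c k : is_ultrafilter U -> islim U a c -> islim U (fun n => k * a n) (k * c).
Proof. intros HU Ha eps He.
  assert (Hk : 0 < Rabs k + 1) by (pose proof (Rabs_pos k); lra).
  apply (U_mono U _ _ HU (Ha (eps / (Rabs k + 1)) ltac:(apply Rdiv_lt_0_compat; lra))).
  intros n Hn. replace (k * a n - k * c) with (k * (a n - c)) by ring. rewrite Rabs_mult.
  apply (Rle_lt_trans _ ((Rabs k + 1) * Rabs (a n - c))).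
  - apply Rmult_le_compat_r; [apply Rabs_pos|lra].
  - apply (Rmult_lt_compat_l (Rabs k + 1)) in Hn; auto.
    replace ((Rabs k + 1) * (eps / (Rabs k + 1))) with eps in Hn by (field; lra). auto. Qed.

Lemma islim_nonneg U a c : is_ultrafilter U -> (forall n, 0 <= a n) -> islim U a c -> 0 <= c.
Proof. intros HU Hp Ha. apply Rnot_lt_le; intro Hc.
  destruct (U_ne U _ HU (Ha (- c) ltac:(lra))) as [n Hn]. specialize (Hp n). apply abs_lt in Hn. lra. Qed.

Definition rn (n : nat) : nat -> bool := fun i => Nat.eqb i n.
Definition Gs U (n : nat) (t : tree) : bool := (Eset (p0 U) (rn n) t && (2 ^ (2 * n + 6) <=? card t))%bool.

Lemma Gs_disj_lt U n m t : (n < m)%nat -> Gs U n t = true -> Gs U m t = true -> False.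
Proof. intros Hnm H1 H2. unfold Gs in *. apply andb_prop in H1; apply andb_prop in H2.
  destruct H1 as [E1 C1]; destruct H2 as [E2 C2]. apply Nat.leb_le in C2.
  apply (disj (p0 U) (rn n) (rn m) n) with (t := t); auto.
  - unfold rn. rewrite Nat.eqb_refl. destruct (Nat.eqb_spec n m); [lia|congruence].
  - pose proof (p0_le U).
    assert (2 ^ (2 * n + 4 + p0 U) <= 2 ^ (2 * n + 5))%nat by (apply Nat.pow_le_mono_r; lia).
    assert (2 ^ (2 * n + 6) <= 2 ^ (2 * m + 6))%nat by (apply Nat.pow_le_mono_r; lia).
    assert (2 ^ (2 * n + 6) = 2 * 2 ^ (2 * n + 5))%nat.
    { replace (2 * n + 6)%nat with (S (2 * n + 5)) by lia. apply Nat.pow_succ_r'. }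
    lia.
Qed.

Lemma Gs_disj U n m t : Gs U n t = true -> Gs U m t = true -> n = m.
Proof. intros H1 H2. destruct (Nat.lt_trichotomy n m) as [H|[H|H]]; auto; exfalso.
  - apply (Gs_disj_lt U n m t); auto.
  - apply (Gs_disj_lt U m n t); auto. Qed.

Definition Fb U (t : tree) : R :=
  match t with Leaf => 0
  | Node x y => if excluded_middle_informative (exists n, Gs U n x = true /\ Gs U n y = true) then 1 else 0 end.

Lemma Fb_bounds U t : 0 <= Fb U t <= 1.
Proof. destruct t; simpl; [lra|]. destruct excluded_middle_informative; lra. Qed.
Lemma Fb_bounded U : bounded (Fb U).
Proof. exists 1. intros t. pose proof (Fb_bounds U t). apply abs_le; lra. Qed.

Lemma part2 U mu : is_ultrafilter U -> U (fun n => (0 < n)%nat) -> uf_idempotent U ->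
  in_AU U mu -> idem mu -> ~ wclosed (fun mu => in_AU U mu /\ idem mu).
Proof.
  intros HU hN hI HA Hid Hcl.
  destruct (part1 U mu HU hN hI HA Hid) as [P1 [P2 P3]].
  set (Ms := fun n => Mr U mu (rn n)).
  assert (Msm : forall n, is_mean (Ms n)) by (intros n; apply (proj1 (proj1 (P1 (rn n))))).
  set (nu := fun f => ulim U (fun n => Ms n f)).
  assert (nulim : forall f, bounded f -> islim U (fun n => Ms n f) (nu f)).
  { intros f [M HM]. apply ulim_spec. apply (islim_exists U _ M HU). intros n. apply mean_abs_le; auto. }
  assert (num : is_mean nu).
  { split; [|split; [|split]].
    - intros f g Hf Hg. unfold nu at 1.
      rewrite (functional_extensionality (fun n => Ms n (fun t => f t + g t)) (fun n => Ms n f + Ms n g))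
        by (intros n; apply mean_add; auto).
      apply ulim_eq; auto. apply islim_plus; auto.
    - intros c f Hf. unfold nu at 1.
      rewrite (functional_extensionality (fun n => Ms n (fun t => c * f t)) (fun n => c * Ms n f))
        by (intros n; apply mean_scal; auto).
      apply ulim_eq; auto. apply islim_scal; auto.
    - intros f Hf Hp. apply (islim_nonneg U (fun n => Ms n f)); auto. intros n; apply mean_pos; auto.
    - unfold nu. rewrite (functional_extensionality (fun n => Ms n (fun _ => 1)) (fun _ => 1))
        by (intros n; apply mean_const; auto).
      apply ulim_eq; auto. apply islim_const; auto. }
  assert (MG : forall n, Ms n (indicator (Gs U n)) = 1).
  { intros n. unfold Ms, Mr, push.
    set (B := (2 ^ (2 * n + 6))%nat).
    assert (Hz : mu (fun t => 1 - indicator (Gs U n) (phi (p0 U) (rn n) t)) = 0).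
    { apply (null_card U mu (fun k => (B <=? k)%nat)); auto.
      - apply (U_mono U _ _ HU (U_gt U HU hN hI B)). intros k Hk; apply Nat.leb_le; lia.
      - apply bounded_minus; [apply bounded_const|apply bounded_comp, bounded_ind].
      - intros t Ht. unfold indicator, Gs. rewrite Eset_phi, card_phi. fold B. rewrite Ht. simpl. ring. }
    destruct HA as [Hm _].
    rewrite mean_minus in Hz; auto; [|apply bounded_const|apply bounded_comp, bounded_ind].
    rewrite mean_const in Hz; auto. lra. }
  assert (MF : forall n, Ms n (Fb U) = 1).
  { intros n. destruct (proj2 (P1 (rn n))) as [_ Hidn]. fold (Ms n) in Hidn.
    rewrite <- (Hidn (Fb U) (Fb_bounded U)). unfold conv.
    apply Rle_antisym.
    - apply Rle_trans with (Ms n (fun _ => 1)); [|rewrite mean_const; auto; lra]. apply mean_mono; auto.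
      + apply bounded_inner; auto; apply Fb_bounded.
      + apply bounded_const.
      + intros x. apply Rle_trans with (Ms n (fun _ => 1)); [|rewrite mean_const; auto; lra]. apply mean_mono; auto.
        * apply bounded_comp with (g := fun y => Node x y) (f := Fb U); apply Fb_bounded.
        * apply bounded_const.
        * intros y; apply Fb_bounds.
    - apply Rle_trans with (Ms n (indicator (Gs U n))); [rewrite MG; lra|]. apply mean_mono; auto.
      + apply bounded_ind.
      + apply bounded_inner; auto; apply Fb_bounded.
      + intros x. unfold indicator at 1. destruct (Gs U n x) eqn:Gx.
        * apply Rle_trans with (Ms n (indicator (Gs U n))); [rewrite MG; lra|]. apply mean_mono; auto.
          -- apply bounded_ind.
          -- apply bounded_comp with (g := fun y => Node x y) (f := Fb U); apply Fb_bounded.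
          -- intros y. unfold indicator. destruct (Gs U n y) eqn:Gy; [|apply Fb_bounds].
             simpl. destruct excluded_middle_informative as [_|C]; [lra|]. exfalso; eauto.
        * apply mean_pos; auto.
          -- apply bounded_comp with (g := fun y => Node x y) (f := Fb U); apply Fb_bounded.
          -- intros y; apply Fb_bounds. }
  assert (nuF : nu (Fb U) = 1).
  { unfold nu. rewrite (functional_extensionality (fun n => Ms n (Fb U)) (fun _ => 1)) by auto.
    apply ulim_eq; auto. apply islim_const; auto. }
  assert (nu0 : forall x, nu (fun y => Fb U (Node x y)) = 0).
  { intros x. destruct (classic (exists n, Gs U n x = true)) as [[n Hn]|Hno].
    - rewrite (functional_extensionality (fun y => Fb U (Node x y)) (indicator (Gs U n))).
      + unfold nu. apply ulim_eq; auto. intros eps He.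
        apply (U_mono U _ _ HU (U_gt U HU hN hI n)). intros m Hm.
        assert (Z : Ms m (indicator (Gs U n)) = 0).
        { apply Rle_antisym.
          - rewrite <- (P3 (rn m) (rn n)).
            + apply mean_mono; [apply Msm|apply bounded_ind|apply bounded_ind|]. intros t. unfold indicator, Gs, Er.
              destruct (Eset (p0 U) (rn n) t); simpl; [|lra]. destruct (_ <=? _)%nat; lra.
            + intro E. assert (rn m m = rn n m) by (rewrite E; auto). unfold rn in H.
              rewrite Nat.eqb_refl in H. symmetry in H. apply Nat.eqb_eq in H. lia.
          - apply mean_pos; auto. apply bounded_ind. intros t; unfold indicator; destruct (Gs U n t); lra. }
        rewrite Z, Rminus_0_r, Rabs_R0; auto.
      + intros y. simpl. unfold indicator. destruct excluded_middle_informative as [[m [Hm1 Hm2]]|C].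
        * rewrite (Gs_disj U n m x Hn Hm1). rewrite Hm2. auto.
        * destruct (Gs U n y) eqn:Gy; auto. exfalso; eauto.
    - rewrite (functional_extensionality (fun y => Fb U (Node x y)) (fun _ => 0)).
      + rewrite (mean_const nu 0 num); auto.
      + intros y. simpl. destruct excluded_middle_informative as [[m [Hm1 Hm2]]|C]; auto.
        exfalso; eauto. }
  assert (nidem : ~ idem nu).
  { intros [_ Hi]. specialize (Hi (Fb U) (Fb_bounded U)). unfold conv in Hi.
    rewrite (functional_extensionality (fun x => nu (fun y => Fb U (Node x y))) (fun _ => 0)) in Hi by auto.
    rewrite (mean_const nu 0 num) in Hi. lra. }
  destruct (Hcl nu num (conj num (fun H => nidem (proj2 H)))) as [fs [eps [He [Hb Hc]]]].
  assert (Uc : U (fun n => forall f, In f fs -> Rabs (Ms n f - nu f) < eps)).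
  { clear Hc. induction Hb as [|f fs Hf Hfs IH].
    - apply (U_mono U _ _ HU (U_true U HU)). intros n _ f [].
    - apply (U_mono U _ _ HU (U_and U _ _ HU (nulim f Hf eps He) IH)).
      intros n [A B] g [E|E]; [subst; auto|auto]. }
  destruct (U_ne U _ HU Uc) as [n Hn].
  destruct (Hc (Ms n) (Msm n) Hn) as [_ HC]. apply HC. apply (P1 (rn n)).
Qed.

Theorem proposition6p2 (U : (nat -> Prop) -> Prop)
  (hU : is_ultrafilter U) (hN : U (fun n => (0 < n)%nat))
  (hidem : uf_idempotent U) :
  ((exists mu, in_AU U mu /\ idem mu) ->
    exists (mu : (nat -> bool) -> (tree -> R) -> R) (E : (nat -> bool) -> tree -> bool),
      (forall r, in_AU U (mu r) /\ idem (mu r)) /\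
      (forall r, mu r (indicator (E r)) = 1) /\
      (forall r s, r <> s -> mu r (indicator (E s)) = 0)) /\
  ((forall mu, ~ (in_AU U mu /\ idem mu)) \/
   ~ wclosed (fun mu => in_AU U mu /\ idem mu)).
Proof.
  split.
  - intros [mu [HA Hid]]. exists (Mr U mu), (Er U). apply part1; auto.
  - destruct (classic (exists mu, in_AU U mu /\ idem mu)) as [[mu [HA Hid]]|H].
    + right. apply (part2 U mu); auto.
    + left. intros mu Hmu. apply H; eauto.
Qed.
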